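(* For any $\theta\in(0,1)$ there exist $\delta^*>0$ and a nonnegative $2\pi$-periodic function $W_\theta\in W^{1,\infty}$ with $W_\theta(x)=O(|x|^3)$ as $x\to0$ and $W_\theta(x)>0$ for $x\notin2\pi\mathbb Z$, such that the following holds. Let $x_0^*\in(-\delta^*,\delta^* )$, let $x^*(t)=2\arctan\big(e^{-t}\tan(x_0^*/2)\big)$, $\Omega^*(t)=[-\pi-x^*(t),\pi-x^*(t)]$, $\Omega^*_0=\Omega^*(0)$, and let $\varepsilon_0\in C^3(\Omega_0^* )$ with $\varepsilon_0(x)=O(|x|^3)$ as $x\to0$. Then the unique global solution $\varepsilon(t)=e^{tL}\varepsilon_0$ of $$\partial_t\varepsilon=L(\varepsilon)\ \text{ on }\Omega^*(t),\qquad \varepsilon(0)=\varepsilon_0\text{ on }\Omega^*_0,\qquad L(\varepsilon)=2\cos(x)\varepsilon-\sin(x)\partial_x\varepsilon+\sin(x)\int_0^x\varepsilon(t,\bar x)\,d\bar x,$$ satisfies for all $t\ge0$ $$\Big\|\frac{e^{tL}\varepsilon_0}{W_\theta}\Big\|_{L^\infty(\Omega^*(t))}\le e^{-(1-\theta)t}\Big\|\frac{\varepsilon_0}{W_\theta}\Big\|_{L^\infty(\Omega^*_0)}.$$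
   Context: $\Omega^*(t)$ is the image of $\Omega_0^*$ under the flow $\dot X=\sin X$, i.e. its endpoints $\pm\pi-x^*(t)$ solve this ODE. *)

(* Defs.v *)
From Stdlib Require Import Reals Lra.
From Coquelicot Require Import Coquelicot.
Open Scope R_scope.

Definition xstar (x0 t : R) : R := 2 * atan (exp (- t) * tan (x0 / 2)).

Definition in_Omega (x0 t x : R) : Prop :=
  - PI - xstar x0 t <= x <= PI - xstar x0 t.

Definition in_Omega_int (x0 t x : R) : Prop :=
  - PI - xstar x0 t < x < PI - xstar x0 t.

Definition in_2piZ (x : R) : Prop := exists k : Z, x = 2 * PI * IZR k.

Definition bigO_cube0 (f : R -> R) : Prop :=
  exists C eta : R, 0 < eta /\
    forall x, Rabs x < eta -> Rabs (f x) <= C * Rabs x ^ 3.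

(* W in W^{1,oo}(R) (continuous representative): bounded and Lipschitz *)
Definition W1inf (W : R -> R) : Prop :=
  (exists M, forall x, Rabs (W x) <= M) /\
  (exists K, forall x y, Rabs (W x - W y) <= K * Rabs (x - y)).

Definition C3_on (a b : R) (f : R -> R) : Prop :=
  exists g : R -> R,
    (forall k x, (k <= 3)%nat -> ex_derive_n g k x) /\
    (forall x, continuity_pt (Derive_n g 3) x) /\
    (forall x, a <= x <= b -> g x = f x).

(* The zero set of W on Omega*(t) is a null set (W>0 off 2piZ), and for the
   continuous functions considered the essential supremum equals the
   supremum over the points where W does not vanish. *)
Definition Linf_ratio (x0 t : R) (f W : R -> R) : Rbar :=
  Lub_Rbar (fun r => exists x, in_Omega x0 t x /\ W x <> 0 /\
                               r = Rabs (f x / W x)).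

Definition is_global_solution (x0 : R) (eps0 : R -> R) (eps : R -> R -> R) : Prop :=
  (forall x, in_Omega x0 0 x -> eps 0 x = eps0 x) /\
  (forall t x, 0 <= t -> in_Omega x0 t x ->
     forall e : R, 0 < e -> exists d : R, 0 < d /\
       forall s y, 0 <= s -> in_Omega x0 s y -> Rabs (s - t) < d -> Rabs (y - x) < d ->
         Rabs (eps s y - eps t x) < e) /\
  (forall t x, 0 < t -> in_Omega_int x0 t x ->
     ex_derive (fun s => eps s x) t /\
     ex_derive (fun y => eps t y) x /\
     continuous (fun p : R * R => Derive (fun s => eps s (snd p)) (fst p)) (t, x) /\
     continuous (fun p : R * R => Derive (fun y => eps (fst p) y) (snd p)) (t, x) /\
     Derive (fun s => eps s x) t =
       2 * cos x * eps t x - sin x * Derive (fun y => eps t y) x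
       + sin x * RInt (fun y => eps t y) 0 x).

(* Main.v *)
Require Import Defs.
From Stdlib Require Import Reals Lra Psatz ZArith.
From Coquelicot Require Import Coquelicot.
Open Scope R_scope.


Lemma ball_R (x d y : R) : ball x d y <-> Rabs (y - x) < d.
Proof. unfold ball; simpl; unfold AbsRing_ball, abs, minus, plus, opp; simpl. tauto. Qed.

Lemma cont_eps (f : R -> R) x : continuous f x ->
  forall e, 0 < e -> exists d, 0 < d /\ forall y, Rabs (y - x) < d -> Rabs (f y - f x) < e.
Proof.
  intros H e He. apply continuity_pt_filterlim in H.
  apply continuity_pt_locally with (eps := mkposreal e He) in H.
  destruct H as [d Hd]. exists d. split. apply cond_pos.
  intros y Hy. apply Hd. apply ball_R. exact Hy.
Qed.

Lemma eps_cont (f : R -> R) x :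
  (forall e, 0 < e -> exists d, 0 < d /\ forall y, Rabs (y - x) < d -> Rabs (f y - f x) < e)
  -> continuous f x.
Proof.
  intros H. apply continuity_pt_filterlim. apply continuity_pt_locally.
  intros e. destruct (H e (cond_pos e)) as [d [Hd H2]].
  exists (mkposreal d Hd). intros y Hy. apply H2. apply ball_R. exact Hy.
Qed.

Lemma sin_lip a b : Rabs (sin a - sin b) <= Rabs (a - b).
Proof.
  destruct (MVT_abs sin cos b a) as [c [Hc _]].
  { intros c _. apply derivable_pt_lim_sin. }
  rewrite Hc. rewrite <- (Rmult_1_l (Rabs (a - b))) at 2.
  apply Rmult_le_compat_r. apply Rabs_pos. apply Rabs_le. apply COS_bound.
Qed.

Lemma cos_lip a b : Rabs (cos a - cos b) <= Rabs (a - b).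
Proof.
  destruct (MVT_abs cos (fun x => - sin x) b a) as [c [Hc _]].
  { intros c _. apply derivable_pt_lim_cos. }
  rewrite Hc. rewrite <- (Rmult_1_l (Rabs (a - b))) at 2.
  apply Rmult_le_compat_r. apply Rabs_pos. rewrite Rabs_Ropp. apply Rabs_le. apply SIN_bound.
Qed.

Definition W (x : R) : R := Rabs (sin (x / 2)) ^ 3.
Definition dW (x : R) : R := 3 / 2 * sin (x / 2) * Rabs (sin (x / 2)) * cos (x / 2).
Definition V (x : R) : R := 2 / 3 * (1 - cos (x / 2)) ^ 2 * (2 + cos (x / 2)).

Lemma W_nonneg x : 0 <= W x.
Proof. unfold W. apply pow_le. apply Rabs_pos. Qed.

Lemma W_le1 x : W x <= 1.
Proof. unfold W. pose proof (Rabs_pos (sin (x/2))).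
  assert (Rabs (sin (x/2)) <= 1) by (apply Rabs_le; apply SIN_bound). nra. Qed.

Lemma W_per x : W (x + 2 * PI) = W x.
Proof. unfold W. replace ((x + 2 * PI) / 2) with (x / 2 + PI) by field.
  rewrite neg_sin. rewrite Rabs_Ropp. reflexivity. Qed.

Lemma cube_lip a b : 0 <= a <= 1 -> 0 <= b <= 1 -> Rabs (a ^ 3 - b ^ 3) <= 3 * Rabs (a - b).
Proof.
  intros Ha Hb. replace (a ^ 3 - b ^ 3) with ((a - b) * (a*a + a*b + b*b)) by ring.
  rewrite Rabs_mult. rewrite (Rabs_right (a*a+a*b+b*b)) by (apply Rle_ge; nra).
  rewrite (Rmult_comm 3). apply Rmult_le_compat_l. apply Rabs_pos. nra.
Qed.

Lemma W_lip x y : Rabs (W x - W y) <= 3 / 2 * Rabs (x - y).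
Proof.
  unfold W. eapply Rle_trans. apply cube_lip.
  split. apply Rabs_pos. apply Rabs_le; apply SIN_bound.
  split. apply Rabs_pos. apply Rabs_le; apply SIN_bound.
  eapply Rle_trans. apply Rmult_le_compat_l. lra. apply Rabs_triang_inv2.
  eapply Rle_trans. apply Rmult_le_compat_l. lra. apply sin_lip.
  replace (x / 2 - y / 2) with ((x - y) * / 2) by field.
  rewrite Rabs_mult. rewrite (Rabs_right (/2)) by lra. lra.
Qed.

Lemma W_W1inf : W1inf W.
Proof.
  split. exists 1. intros x. rewrite Rabs_right. apply W_le1. apply Rle_ge, W_nonneg.
  exists (3/2). apply W_lip.
Qed.

Lemma W_bigO : bigO_cube0 W.
Proof.
  exists (1/8), 1. split. lra. intros x _.
  rewrite Rabs_right by (apply Rle_ge, W_nonneg). unfold W.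
  pose proof (sin_lip (x/2) 0). rewrite sin_0, !Rminus_0_r in H.
  rewrite Rabs_div in H by lra. rewrite (Rabs_right 2) in H by lra.
  pose proof (Rabs_pos (sin (x/2))). pose proof (Rabs_pos x).
  replace (1 / 8 * Rabs x ^ 3) with ((Rabs x / 2) ^ 3) by field.
  apply pow_incr. lra.
Qed.

Lemma W_pos x : ~ in_2piZ x -> 0 < W x.
Proof.
  intros H. unfold W. apply pow_lt. apply Rabs_pos_lt. intros Hs.
  apply H. destruct (sin_eq_0_0 _ Hs) as [k Hk]. exists k. lra.
Qed.

Lemma locally_R (x : R) (P : R -> Prop) :
  (exists d, 0 < d /\ forall y, Rabs (y - x) < d -> P y) -> locally x P.
Proof. intros [d [Hd H]]. exists (mkposreal d Hd). intros y Hy. apply H. apply ball_R. exact Hy. Qed.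

Lemma cube_abs_derive (u : R) : is_derive (fun v => Rabs v ^ 3) u (3 * u * Rabs u).
Proof.
  destruct (Rtotal_order u 0) as [Hu|[Hu|Hu]].
  - apply is_derive_ext_loc with (fun v => - v ^ 3).
    + apply locally_R. exists (- u). split. lra. intros y Hy.
      apply Rabs_lt_between in Hy. rewrite Rabs_left by lra. simpl. ring.
    + rewrite (Rabs_left u) by lra. auto_derive. auto. ring.
  - subst u. rewrite Rmult_0_r, Rmult_0_l. apply is_derive_Reals.
    intros e He. exists (mkposreal (Rmin 1 e) (Rmin_pos _ _ Rlt_0_1 He)).
    intros h Hh Hh2. simpl in Hh2. rewrite Rplus_0_l, Rabs_R0. simpl.
    replace ((Rabs h * (Rabs h * (Rabs h * 1)) - 0 * (0 * (0 * 1))) / h - 0)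
      with (Rabs h * Rabs h * (Rabs h / h)) by (field; auto).
    rewrite Rabs_mult, Rabs_mult, Rabs_div by auto. rewrite Rabs_Rabsolu.
    try rewrite Rabs_Rabsolu. unfold Rdiv. rewrite Rinv_r by (apply Rabs_no_R0; auto).
    pose proof (Rmin_l 1 e). pose proof (Rmin_r 1 e). pose proof (Rabs_pos h). nra.
  - apply is_derive_ext_loc with (fun v => v ^ 3).
    + apply locally_R. exists u. split. lra. intros y Hy.
      apply Rabs_lt_between in Hy. rewrite Rabs_right by lra. simpl. ring.
    + rewrite (Rabs_right u) by lra. auto_derive. auto. ring.
Qed.

Lemma W_derive (x : R) : is_derive W x (dW x).
Proof.
  assert (H1 : is_derive (fun x => sin (x/2)) x (cos (x/2) * /2)).
  { auto_derive. auto. unfold Rdiv. ring. }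
  pose proof (is_derive_comp _ _ x _ _ (cube_abs_derive (sin (x/2))) H1) as H2.
  unfold W, dW. replace (3 / 2 * sin (x / 2) * Rabs (sin (x / 2)) * cos (x / 2))
   with (scal (cos (x/2) * /2) (3 * sin (x/2) * Rabs (sin (x/2)))). exact H2.
  unfold scal; simpl; unfold mult; simpl. field.
Qed.

Lemma W_cont (x : R) : continuous W x.
Proof. apply (ex_derive_continuous (K := R_AbsRing) (V := R_NormedModule)). exists (dW x). apply W_derive. Qed.

Lemma V_derive (y : R) : is_derive V y (sin (y/2) ^ 3).
Proof.
  unfold V. auto_derive. auto. unfold Rdiv.
  replace (sin (y * / 2) ^ 3) with (sin (y * /2) * (1 - cos (y * /2) ^2)).
  2:{ pose proof (sin2_cos2 (y * /2)). unfold Rsqr in H. simpl.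
       replace (1 - cos (y * / 2) * (cos (y * / 2) * 1)) with (sin (y * / 2) * sin (y * / 2)) by lra. ring. }
  simpl. field.
Qed.

Lemma V0 : V 0 = 0.
Proof. unfold V. replace (0/2) with 0 by field. rewrite cos_0. ring. Qed.

Lemma V_int_pos (x : R) : 0 <= x <= 2 * PI -> is_RInt W 0 x (V x).
Proof.
  intros Hx. replace (V x) with (minus (V x) (V 0)).
  2:{ rewrite V0. unfold minus, plus, opp; simpl. ring. }
  apply (is_RInt_derive (V := R_CompleteNormedModule)).
  - intros y Hy. rewrite Rmin_left in Hy by lra. rewrite Rmax_right in Hy by lra.
    replace (W y) with (sin (y/2) ^ 3). apply V_derive.
    unfold W. rewrite Rabs_right. reflexivity. apply Rle_ge, sin_ge_0; lra.
  - intros y _. apply W_cont.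
Qed.

Lemma V_int_neg (x : R) : - 2 * PI <= x <= 0 -> is_RInt W x 0 (V x).
Proof.
  intros Hx. replace (V x) with (minus ((fun y => - V y) 0) ((fun y => - V y) x)).
  2:{ simpl. rewrite V0. unfold minus, plus, opp; simpl. ring. }
  apply (is_RInt_derive (V := R_CompleteNormedModule) (fun y => - V y) W x 0).
  - intros y Hy. rewrite Rmin_left in Hy by lra. rewrite Rmax_right in Hy by lra.
    replace (W y) with (- sin (y/2) ^ 3). apply is_derive_Reals, (derivable_pt_lim_opp V), is_derive_Reals, V_derive.
    unfold W. rewrite Rabs_left1. ring.
    replace (y/2) with (- (- y / 2)) by field. rewrite sin_neg.
    assert (0 <= sin (- y / 2)) by (apply sin_ge_0; lra). lra.
  - intros y _. apply W_cont.
Qed.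

Lemma poly_key (C th A : R) : 0 < th < 1 -> - / 20 <= C <= 1 -> 0 <= A -> A * A = 1 - C * C ->
  (C * C - 1 - th) * (A * A) + 4 / 3 * Rabs C * ((1 - C) * (1 - C)) * (2 + C) <= 0.
Proof.
  intros Hth HC HA HA2. rewrite HA2.
  destruct (Rle_or_lt 0 C) as [H0|H0].
  - rewrite Rabs_right by lra.
    assert (E : (C * C - 1 - th) * (1 - C * C) + 4 / 3 * C * ((1 - C) * (1 - C)) * (2 + C)
       = - ((1 - C) * (1 - C) * (1 - C) * (1 + C / 3)) - th * (1 - C * C)) by field.
    rewrite E. assert (0 <= (1 - C) * (1 - C) * (1 - C) * (1 + C / 3)).
    { apply Rmult_le_pos. apply Rmult_le_pos. apply Rmult_le_pos. lra. lra. lra. lra. }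
    assert (0 <= th * (1 - C * C)) by (apply Rmult_le_pos; nra). lra.
  - rewrite Rabs_left by lra.
    assert (0 <= (1 - C * C) * th) by (apply Rmult_le_pos; nra).
    assert (1 - C * C >= 1 - / 400) by nra.
    assert ((1 - C) * (1 - C) <= 2) by nra.
    assert (4 / 3 * - C * ((1 - C) * (1 - C)) * (2 + C) <= 4 / 3 * / 20 * 2 * 3).
    { assert (0 <= - C) by lra. assert (0 <= (1 - C) * (1 - C)) by nra.
      assert (2 + C <= 3) by lra.
      assert (- C * ((1 - C) * (1 - C)) <= / 20 * 2) by nra.
      assert (0 <= - C * ((1 - C) * (1 - C))) by nra. nra. }
    nra.
Qed.

Lemma cos_half_lb (x : R) : Rabs x <= PI + / 10 -> - / 20 <= cos (x / 2).
Proof.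
  intros Hx. apply Rabs_le_between in Hx.
  destruct (Rle_or_lt (x/2) (PI/2)) as [H1|H1].
  - destruct (Rle_or_lt (- (PI/2)) (x/2)) as [H2|H2].
    + pose proof (cos_ge_0 (x/2) H2 H1). lra.
    + pose proof (cos_lip (x/2) (- (PI/2))). rewrite cos_neg, cos_PI2 in H.
      rewrite (Rabs_left (x / 2 - - (PI / 2))) in H by lra. apply Rabs_le_between in H. lra.
  - pose proof (cos_lip (x/2) (PI/2)). rewrite cos_PI2 in H.
    rewrite (Rabs_right (x / 2 - PI / 2)) in H by lra. apply Rabs_le_between in H. lra.
Qed.

Lemma key_ineq (th x : R) : 0 < th < 1 -> Rabs x <= PI + / 10 ->
  (2 * cos x + (1 - th)) * W x - dW x * sin x + Rabs (sin x) * V x <= 0.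
Proof.
  intros Hth Hx. pose proof (cos_half_lb x Hx) as HC.
  assert (Hs : sin x = 2 * sin (x/2) * cos (x/2)) by (rewrite <- sin_2a; f_equal; field).
  assert (Hc : cos x = 2 * cos (x/2) * cos (x/2) - 1) by (rewrite <- cos_2a_cos; f_equal; field).
  rewrite Hs, Hc. unfold W, dW, V.
  pose proof (sin2_cos2 (x/2)) as HSC. unfold Rsqr in HSC.
  pose proof (COS_bound (x/2)) as HC2.
  set (S := sin (x/2)) in *. set (C := cos (x/2)) in *.
  clearbody S C.
  set (A := Rabs S).
  assert (HA : 0 <= A) by apply Rabs_pos.
  assert (HSS : S * S = A * A).
  { unfold A. rewrite <- Rabs_mult. rewrite Rabs_right. reflexivity.
    pose proof (Rle_0_sqr S). unfold Rsqr in *. lra. }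
  assert (HA2 : A * A = 1 - C * C) by lra.
  replace (Rabs (2 * S * C)) with (2 * A * Rabs C).
  2:{ rewrite !Rabs_mult. rewrite (Rabs_right 2) by lra. reflexivity. }
  pose proof (poly_key C th A Hth ltac:(lra) HA HA2) as HP.
  match goal with |- ?L <= 0 =>
    assert (E : L = A * ((C * C - 1 - th) * (A * A) + 4 / 3 * Rabs C * ((1 - C) * (1 - C)) * (2 + C))
                    + 3 * C * C * A * (A * A - S * S)) by (unfold A; field) end.
  rewrite E. replace (A * A - S * S) with 0 by lra. rewrite Rmult_0_r, Rplus_0_r.
  rewrite <- (Rmult_0_r A). apply Rmult_le_compat_l; assumption.
Qed.


Lemma comparison (g g' : R -> R) (T L : R) :
  0 < T -> 0 <= L ->
  (forall e, 0 < e -> exists d, 0 < d /\ forall s, 0 <= s -> s < d -> s <= T -> Rabs (g s - g 0) < e) ->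
  (forall s, 0 < s <= T -> is_derive g s (g' s)) ->
  (forall s, 0 < s <= T -> 0 < g s -> g' s <= L * g s) ->
  g 0 <= 0 -> g T <= 0.
Proof.
  intros HT HL Hc0 Hd Hineq Hg0.
  destruct (Rle_or_lt (g T) 0) as [H|HgT]; [exact H|exfalso].
  set (E := fun s => 0 <= s <= T /\ g s <= 0).
  destruct (completeness E) as [s0 [Hub Hlub]].
  { exists T. intros x [Hx _]. lra. }
  { exists 0. split. lra. exact Hg0. }
  assert (Hs0 : 0 <= s0 <= T).
  { split. apply Hub. split. lra. exact Hg0. apply Hlub. intros x [Hx _]. lra. }
  assert (Hpos : forall s, s0 < s <= T -> 0 < g s).
  { intros s Hs. destruct (Rle_or_lt (g s) 0) as [H|H]; [|exact H].
    assert (s <= s0) by (apply Hub; split; lra). lra. }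
  assert (Hrc : forall e, 0 < e -> exists d, 0 < d /\ forall s, s0 <= s -> s < s0 + d -> s <= T -> Rabs (g s - g s0) < e).
  { intros e He. destruct (Rle_lt_or_eq_dec 0 s0 (proj1 Hs0)) as [Hp|Hz].
    - assert (Hc : continuous g s0).
      { apply (ex_derive_continuous (K := R_AbsRing) (V := R_NormedModule)). exists (g' s0). apply Hd. lra. }
      destruct (cont_eps g s0 Hc e He) as [d [Hdp Hd2]]. exists d. split. lra.
      intros s H1 H2 H3. apply Hd2. apply Rabs_lt_between. lra.
    - subst s0. destruct (Hc0 e He) as [d [Hdp Hd2]]. exists d. split. lra.
      intros s H1 H2 H3. apply Hd2; lra. }
  assert (Hgs0 : g s0 <= 0).
  { destruct (Rle_or_lt (g s0) 0) as [H|H]; [exact H|exfalso].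
    destruct (Rle_lt_or_eq_dec 0 s0 (proj1 Hs0)) as [Hp|Hz].
    2:{ subst s0. lra. }
    assert (Hc : continuous g s0).
    { apply (ex_derive_continuous (K := R_AbsRing) (V := R_NormedModule)). exists (g' s0). apply Hd. lra. }
    destruct (cont_eps g s0 Hc (g s0) H) as [d [Hdp Hd2]].
    assert (s0 <= s0 - d).
    { apply Hlub. intros x [Hx1 Hx2]. destruct (Rle_or_lt x (s0 - d)) as [H3|H3]; [exact H3|].
      assert (x <= s0) by (apply Hub; split; assumption).
      assert (Rabs (x - s0) < d) by (apply Rabs_lt_between; lra).
      specialize (Hd2 x H1). apply Rabs_lt_between in Hd2. lra. }
    lra. }
  assert (HsT : s0 < T) by (destruct (Rle_lt_or_eq_dec s0 T (proj2 Hs0)); [assumption | subst; lra]).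
  set (h := fun s => g s * exp (- L * s)).
  set (hT := h T).
  assert (HhT : 0 < hT) by (unfold hT, h; apply Rmult_lt_0_compat; [lra | apply exp_pos]).
  destruct (Hrc hT HhT) as [d [Hdp Hd2]].
  set (eps := Rmin d (T - s0) / 2).
  assert (Heps : 0 < eps /\ eps < d /\ eps < T - s0).
  { unfold eps. pose proof (Rmin_l d (T - s0)). pose proof (Rmin_r d (T - s0)).
    assert (0 < Rmin d (T - s0)) by (apply Rmin_pos; lra). lra. }
  assert (H1 : g (s0 + eps) < hT).
  { specialize (Hd2 (s0 + eps) ltac:(lra) ltac:(lra) ltac:(lra)). apply Rabs_lt_between in Hd2. lra. }
  assert (H2 : h (s0 + eps) < hT).
  { unfold h. destruct (Rle_or_lt (g (s0 + eps)) 0) as [H3|H3].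
    - assert (0 <= exp (- L * (s0 + eps))) by (left; apply exp_pos). nra.
    - assert (exp (- L * (s0 + eps)) <= 1).
      { rewrite <- exp_0. destruct (Req_dec L 0) as [HL0|HL0].
        + subst. rewrite Ropp_0, Rmult_0_l. lra.
        + left. apply exp_increasing. nra. }
      nra. }
  destruct (MVT_cor2 h (fun s => g' s * exp (- L * s) + g s * (- L * exp (- L * s))) (s0 + eps) T) as [c [Hc1 Hc2]].
  { lra. }
  { intros c Hc. unfold h. apply (derivable_pt_lim_mult g (fun s => exp (- L * s))).
    apply is_derive_Reals. apply Hd. lra.
    apply is_derive_Reals. auto_derive. auto. ring. }
  assert (Hgc : 0 < g c) by (apply Hpos; lra).
  assert (g' c <= L * g c) by (apply Hineq; [lra | exact Hgc]).
  assert (g' c * exp (- L * c) + g c * (- L * exp (- L * c)) <= 0).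
  { assert (0 < exp (- L * c)) by apply exp_pos.
    replace (g' c * exp (- L * c) + g c * (- L * exp (- L * c))) with ((g' c - L * g c) * exp (- L * c)) by ring.
    nra. }
  assert (h T - h (s0 + eps) <= 0).
  { rewrite Hc1. assert (0 < T - (s0 + eps)) by lra. nra. }
  unfold hT in H2. lra.
Qed.

Lemma cont_of_derive (f : R -> R) x : ex_derive f x -> continuous f x.
Proof. intros H. apply (ex_derive_continuous (K := R_AbsRing) (V := R_NormedModule)). exact H. Qed.

Lemma chain (f : R -> R -> R) (X : R -> R) (s dX d : R) :
  0 < d ->
  (forall u v, Rabs (u - s) < d -> Rabs (v - X s) < d -> ex_derive (fun z => f z v) u) ->
  ex_derive (fun y => f s y) (X s) ->
  continuity_2d_pt (fun u v => Derive (fun z => f z v) u) s (X s) ->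
  is_derive X s dX ->
  is_derive (fun r => f r (X r)) s
    (Derive (fun z => f z (X s)) s + Derive (fun y => f s y) (X s) * dX).
Proof.
  intros Hd Hex Hexy Hcont HX.
  set (A := Derive (fun z => f z (X s)) s).
  assert (K : derivable_pt_lim (fun r => f r (X r) - f s (X r)) s A).
  { intros e He. destruct (Hcont (mkposreal e He)) as [d1 Hd1].
    assert (HXc : continuous X s) by (apply cont_of_derive; exists dX; exact HX).
    assert (Hm : 0 < Rmin d1 d) by (apply Rmin_pos; [apply cond_pos | lra]).
    destruct (cont_eps X s HXc _ Hm) as [d2 [Hd2 Hd2']].
    assert (Hdel : 0 < Rmin (Rmin d1 d) d2) by (apply Rmin_pos; lra).
    exists (mkposreal _ Hdel). intros h Hh0 Hh. simpl in Hh.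
    pose proof (Rmin_l (Rmin d1 d) d2). pose proof (Rmin_r (Rmin d1 d) d2).
    pose proof (Rmin_l d1 d). pose proof (Rmin_r d1 d).
    set (v := X (s + h)).
    assert (Hv : Rabs (v - X s) < Rmin d1 d).
    { apply Hd2'. replace (s + h - s) with h by ring. lra. }
    destruct (MVT_gen (fun z => f z v) s (s + h) (fun z => Derive (fun w => f w v) z)) as [c [Hc Hc2]].
    { intros z Hz. apply Derive_correct. apply (Hex z v).
      apply Rabs_lt_between. 
      destruct (Rle_or_lt 0 h); [rewrite Rmin_left in Hz by lra; rewrite Rmax_right in Hz by lra
       | rewrite Rmin_right in Hz by lra; rewrite Rmax_left in Hz by lra];
      apply Rabs_lt_between in Hh; lra.
      lra. }
    { intros z Hz. apply continuity_pt_filterlim. apply (cont_of_derive (fun w => f w v) z). apply (Hex z v).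
      apply Rabs_lt_between. 
      destruct (Rle_or_lt 0 h); [rewrite Rmin_left in Hz by lra; rewrite Rmax_right in Hz by lra
       | rewrite Rmin_right in Hz by lra; rewrite Rmax_left in Hz by lra];
      apply Rabs_lt_between in Hh; lra.
      lra. }
    simpl in Hc2.
    replace ((f (s + h) v - f s v - (f s (X s) - f s (X s))) / h - A)
      with (Derive (fun w => f w v) c - A).
    2:{ rewrite Hc2. replace (s + h - s) with h by ring. field. exact Hh0. }
    apply Hd1.
    - destruct (Rle_or_lt 0 h); [rewrite Rmin_left in Hc by lra; rewrite Rmax_right in Hc by lra
       | rewrite Rmin_right in Hc by lra; rewrite Rmax_left in Hc by lra];
      apply Rabs_lt_between in Hh; apply Rabs_lt_between; lra.
    - lra. }
  assert (G : derivable_pt_lim (fun r => f s (X r)) s (Derive (fun y => f s y) (X s) * dX)).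
  { apply (derivable_pt_lim_comp X (fun y => f s y)).
    apply is_derive_Reals. exact HX.
    apply is_derive_Reals. apply Derive_correct. exact Hexy. }
  apply is_derive_Reals.
  pose proof (derivable_pt_lim_plus _ _ _ _ _ K G) as HH.
  unfold plus_fct in HH. fold A.
  intros e He. destruct (HH e He) as [dd Hdd]. exists dd. intros h H1 H2.
  specialize (Hdd h H1 H2). simpl in Hdd.
  replace (f (s + h) (X (s + h)) - f s (X (s + h)) + f s (X (s + h))) with (f (s + h) (X (s + h))) in Hdd by ring.
  replace (f s (X s) - f s (X s) + f s (X s)) with (f s (X s)) in Hdd by ring.
  exact Hdd.
Qed.


Lemma atan_le_mono u w : u <= w -> atan u <= atan w.
Proof. intros H. destruct (Req_dec u w). subst; lra. left; apply atan_increasing; lra. Qed.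

Lemma atan_lt_iff u w : atan u < atan w <-> u < w.
Proof. split; intros H. destruct (Rlt_or_le u w); auto. apply atan_le_mono in H0. lra.
  apply atan_increasing; auto. Qed.

Lemma atan_sum_lt u v : 0 < v -> (atan u + atan v < PI / 2 <-> u * v < 1).
Proof.
  intros Hv. pose proof (atan_inv v Hv) as Hi.
  assert (E : atan u + atan v < PI / 2 <-> atan u < atan (/ v)) by (split; intros; lra).
  rewrite E, atan_lt_iff. split; intros H.
  - apply Rmult_lt_compat_r with (r := v) in H; [|lra]. rewrite Rinv_l in H by lra. exact H.
  - apply Rmult_lt_reg_r with v. lra. rewrite Rinv_l by lra. exact H.
Qed.

Lemma atan_sum_gt u v : 0 < v -> (atan u + atan v > PI / 2 <-> u * v > 1).
Proof.
  intros Hv. pose proof (atan_inv v Hv) as Hi.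
  assert (E : atan u + atan v > PI / 2 <-> atan (/ v) < atan u) by (split; intros; lra).
  rewrite E, atan_lt_iff. split; intros H.
  - apply Rmult_lt_compat_r with (r := v) in H; [|lra]. rewrite Rinv_l in H by lra. lra.
  - apply Rmult_lt_reg_r with v. lra. rewrite Rinv_l by lra. lra.
Qed.

Lemma atan_pos_iff u : 0 < atan u <-> 0 < u.
Proof. rewrite <- atan_0 at 1. apply atan_lt_iff. Qed.
Lemma atan_neg_iff u : atan u < 0 <-> u < 0.
Proof. rewrite <- atan_0 at 1. apply atan_lt_iff. Qed.

Lemma sum_lt_inv u v u' v' : u * v = u' * v' -> (0 < v <-> 0 < v') ->
  atan u + atan v < PI / 2 -> atan u' + atan v' < PI / 2.
Proof.
  intros Huv Hs H. destruct (Rlt_or_le 0 v') as [Hv'|Hv'].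
  - apply atan_sum_lt; auto. rewrite <- Huv. apply atan_sum_lt; auto. apply Hs; auto.
  - pose proof (atan_bound u'). assert (atan v' <= atan 0) by (apply atan_le_mono; lra).
    rewrite atan_0 in H1. lra.
Qed.

Lemma sum_gt_inv u v u' v' : u * v = u' * v' -> (0 < v <-> 0 < v') ->
  atan u + atan v > PI / 2 -> atan u' + atan v' > PI / 2.
Proof.
  intros Huv Hs H. destruct (Rlt_or_le 0 v) as [Hv|Hv].
  - apply atan_sum_gt. apply Hs; auto. rewrite <- Huv. apply atan_sum_gt; auto.
  - pose proof (atan_bound u). assert (atan v <= atan 0) by (apply atan_le_mono; lra).
    rewrite atan_0 in H1. lra.
Qed.

Lemma sin_2atan u : sin (2 * atan u) = 2 * u / (1 + u * u).
Proof.
  rewrite sin_2a, sin_atan, cos_atan.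
  assert (H : 0 < 1 + u²) by (unfold Rsqr; nra).
  pose proof (sqrt_lt_R0 _ H) as Hs. pose proof (sqrt_sqrt _ (Rlt_le _ _ H)) as Hss.
  unfold Rsqr in *.
  replace (2 * (u / sqrt (1 + u * u)) * (1 / sqrt (1 + u * u))) with (2 * u / (sqrt (1 + u * u) * sqrt (1 + u * u))) by (field; lra).
  rewrite Hss. reflexivity.
Qed.

Lemma char_derive (k beta : R) : (forall w, sin (w + beta) = sin w) ->
  forall s, is_derive (fun s => 2 * atan (exp s * k) + beta) s (sin (2 * atan (exp s * k) + beta)).
Proof.
  intros Hb s. rewrite Hb, sin_2atan. auto_derive. auto. field.
  assert (0 <= (exp s * k) * (exp s * k)) by nra. lra.
Qed.

Lemma sin_plus_2PI w : sin (w + 2 * PI) = sin w.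
Proof. rewrite sin_plus, sin_2PI, cos_2PI. ring. Qed.
Lemma sin_minus_2PI w : sin (w + - (2 * PI)) = sin w.
Proof. rewrite sin_plus, sin_neg, cos_neg, sin_2PI, cos_2PI. ring. Qed.

Lemma atan_abs a : atan (Rabs a) = Rabs (atan a).
Proof.
  destruct (Rle_or_lt 0 a) as [H|H].
  - rewrite Rabs_right by lra. rewrite Rabs_right. auto.
    apply Rle_ge. rewrite <- atan_0. apply atan_le_mono. auto.
  - rewrite Rabs_left by lra. rewrite atan_opp. rewrite Rabs_left. auto.
    apply atan_neg_iff. auto.
Qed.

Lemma xstar_bound x0 s : Rabs x0 < / 10 -> 0 <= s -> Rabs (xstar x0 s) <= Rabs x0.
Proof.
  intros Hx Hs. unfold xstar.
  pose proof PI2_3_2.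
  assert (Ha : atan (tan (x0 / 2)) = x0 / 2).
  { apply atan_tan. apply Rabs_lt_between in Hx. lra. }
  set (a := tan (x0 / 2)) in *.
  assert (He : 0 < exp (- s) <= 1).
  { split. apply exp_pos. rewrite <- exp_0. destruct (Req_dec s 0). subst. rewrite Ropp_0. lra.
    left. apply exp_increasing. lra. }
  assert (H1 : Rabs (atan (exp (- s) * a)) <= Rabs (atan a)).
  { rewrite <- !atan_abs. apply atan_le_mono. rewrite Rabs_mult. rewrite (Rabs_right (exp (-s))) by lra.
    pose proof (Rabs_pos a). nra. }
  rewrite Ha in H1. rewrite Rabs_mult. rewrite (Rabs_right 2) by lra.
  rewrite Rabs_div in H1 by lra. rewrite (Rabs_right 2) in H1 by lra. lra.
Qed.

Lemma xstar_derive x0 s : is_derive (fun s => xstar x0 s) s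
   (2 * (- exp (- s) * tan (x0/2) / (1 + (exp (- s) * tan (x0/2)) ^ 2))).
Proof. unfold xstar. auto_derive. auto. field.
  assert (0 <= (exp (-s) * tan (x0/2)) ^2) by (apply pow2_ge_0). lra. Qed.

Lemma xstar_cont x0 s : continuous (fun s => xstar x0 s) s.
Proof. apply cont_of_derive. eexists. apply xstar_derive. Qed.

Lemma Omega_open x0 s y : 0 < s -> in_Omega_int x0 s y ->
  exists d, 0 < d /\ forall u v, Rabs (u - s) < d -> Rabs (v - y) < d -> 0 < u /\ in_Omega_int x0 u v.
Proof.
  intros Hs [H1 H2].
  set (m := Rmin s (Rmin (y - (- PI - xstar x0 s)) (PI - xstar x0 s - y)) / 2).
  assert (Hm : 0 < m /\ m <= s / 2 /\ m <= (y - (- PI - xstar x0 s)) / 2 /\ m <= (PI - xstar x0 s - y) / 2).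
  { unfold m. pose proof (Rmin_l s (Rmin (y - (- PI - xstar x0 s)) (PI - xstar x0 s - y))).
    pose proof (Rmin_r s (Rmin (y - (- PI - xstar x0 s)) (PI - xstar x0 s - y))).
    pose proof (Rmin_l (y - (- PI - xstar x0 s)) (PI - xstar x0 s - y)).
    pose proof (Rmin_r (y - (- PI - xstar x0 s)) (PI - xstar x0 s - y)).
    assert (0 < Rmin s (Rmin (y - (- PI - xstar x0 s)) (PI - xstar x0 s - y))).
    { apply Rmin_pos. lra. apply Rmin_pos; lra. }
    lra. }
  destruct (cont_eps _ _ (xstar_cont x0 s) m (proj1 Hm)) as [d [Hd Hd2]].
  exists (Rmin d m). split. apply Rmin_pos; lra.
  intros u v Hu Hv. pose proof (Rmin_l d m). pose proof (Rmin_r d m).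
  specialize (Hd2 u ltac:(lra)). apply Rabs_lt_between in Hd2.
  apply Rabs_lt_between in Hu. apply Rabs_lt_between in Hv.
  unfold in_Omega_int. lra.
Qed.

Lemma pos_mult_iff c a : 0 < c -> (0 < c * a <-> 0 < a).
Proof. intros Hc. split; intros H.
  - destruct (Rlt_or_le 0 a) as [H1|H1]; auto. assert (c * a <= 0) by nra. lra.
  - nra.
Qed.

Lemma uv_const s s1 k a : (exp s * k) * (exp (- s) * a) = (exp s1 * k) * (exp (- s1) * a).
Proof. rewrite !exp_Ropp. field. split; apply Rgt_not_eq, exp_pos. Qed.

Lemma uv_const' s s1 k a : (- (exp s * k)) * (- (exp (- s) * a)) = (- (exp s1 * k)) * (- (exp (- s1) * a)).
Proof. rewrite !exp_Ropp. field. split; apply Rgt_not_eq, exp_pos. Qed.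

Lemma sign_const s s1 a : (0 < exp (- s) * a <-> 0 < exp (- s1) * a).
Proof. rewrite !pos_mult_iff by apply exp_pos. tauto. Qed.

Lemma sign_const' s s1 a : (0 < - (exp (- s) * a) <-> 0 < - (exp (- s1) * a)).
Proof. rewrite !Ropp_mult_distr_r. rewrite !pos_mult_iff by apply exp_pos. tauto. Qed.

Lemma charac x0 s1 y1 : Rabs x0 < / 10 -> 0 < s1 -> in_Omega_int x0 s1 y1 ->
  exists X : R -> R, X s1 = y1 /\ (forall s, is_derive X s (sin (X s))) /\
     (forall s, 0 <= s -> in_Omega_int x0 s (X s)).
Proof.
  intros Hx0 Hs1 Hy1. pose proof PI2_3_2 as Hpi.
  pose proof (xstar_bound x0 s1 Hx0 (Rlt_le _ _ Hs1)) as Hxb.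
  unfold in_Omega_int in *. unfold xstar in *.
  set (a := tan (x0 / 2)) in *.
  apply Rabs_le_between in Hxb.
  destruct (Rtotal_order y1 PI) as [Hlt|[Heq|Hgt]].
  - destruct (Rtotal_order y1 (- PI)) as [Hlt2|[Heq2|Hgt2]].
    +
      assert (Hc : cos (y1 / 2) <> 0).
      { replace (y1 / 2) with ((y1 / 2 + PI) - PI) by ring. rewrite cos_minus, cos_PI, sin_PI.
        assert (0 < cos (y1 / 2 + PI)) by (apply cos_gt_0; lra). lra. }
      assert (HT : atan (tan (y1 / 2)) = PI + y1 / 2).
      { rewrite <- Rtrigo_facts.tan_pi_plus by exact Hc. apply atan_tan. lra. }
      set (k := exp (- s1) * tan (y1 / 2)).
      exists (fun s => 2 * atan (exp s * k) + - (2 * PI)). split; [|split].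
      * unfold k. rewrite <- Rmult_assoc, <- exp_plus, Rplus_opp_r, exp_0, Rmult_1_l, HT. field.
      * apply char_derive. apply sin_minus_2PI.
      * intros s Hs.
        assert (H1 : atan (exp s1 * k) + atan (exp (- s1) * a) > PI / 2).
        { unfold k. rewrite <- Rmult_assoc, <- exp_plus, Rplus_opp_r, exp_0, Rmult_1_l, HT. lra. }
        pose proof (sum_gt_inv _ _ _ _ (uv_const s1 s k a) (sign_const s1 s a) H1).
        pose proof (atan_bound (exp s * k)). pose proof (atan_bound (exp (- s) * a)). lra.
    +
      subst y1. exists (fun _ => - PI). split; [reflexivity|split].
      * intros s. rewrite sin_neg, sin_PI, Ropp_0. apply (is_derive_const (K := R_AbsRing) (V := R_NormedModule)).
      * intros s Hs.
        assert (0 < atan (exp (- s1) * a)) by lra.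
        apply (proj1 (atan_pos_iff _)) in H. apply (proj2 (sign_const s s1 a)) in H. apply (proj2 (atan_pos_iff _)) in H.
        pose proof (atan_bound (exp (- s) * a)). lra.
    +
      assert (HT : atan (tan (y1 / 2)) = y1 / 2) by (apply atan_tan; lra).
      set (k := exp (- s1) * tan (y1 / 2)).
      exists (fun s => 2 * atan (exp s * k) + 0). split; [|split].
      * unfold k. rewrite <- Rmult_assoc, <- exp_plus, Rplus_opp_r, exp_0, Rmult_1_l, HT. field.
      * apply char_derive. intros w; rewrite Rplus_0_r; reflexivity.
      * intros s Hs.
        assert (H1 : atan (exp s1 * k) + atan (exp (- s1) * a) < PI / 2).
        { unfold k. rewrite <- Rmult_assoc, <- exp_plus, Rplus_opp_r, exp_0, Rmult_1_l, HT. lra. }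
        assert (H2 : atan (- (exp s1 * k)) + atan (- (exp (- s1) * a)) < PI / 2).
        { rewrite !atan_opp. unfold k. rewrite <- Rmult_assoc, <- exp_plus, Rplus_opp_r, exp_0, Rmult_1_l, HT. lra. }
        pose proof (sum_lt_inv _ _ _ _ (uv_const s1 s k a) (sign_const s1 s a) H1).
        pose proof (sum_lt_inv _ _ _ _ (uv_const' s1 s k a) (sign_const' s1 s a) H2).
        rewrite !atan_opp in H0. lra.
  -
    subst y1. exists (fun _ => PI). split; [reflexivity|split].
    + intros s. rewrite sin_PI. apply (is_derive_const (K := R_AbsRing) (V := R_NormedModule)).
    + intros s Hs.
      assert (atan (exp (- s1) * a) < 0) by lra.
      apply (proj1 (atan_neg_iff _)) in H.
      assert (0 < - (exp (- s1) * a)) by lra.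
      apply (proj2 (sign_const' s s1 a)) in H0.
      assert (atan (exp (- s) * a) < 0) by (apply atan_neg_iff; lra).
      pose proof (atan_bound (exp (- s) * a)). lra.
  -
    assert (Hc : cos (y1 / 2 - PI) <> 0).
    { assert (0 < cos (y1 / 2 - PI)) by (apply cos_gt_0; lra). lra. }
    assert (HT : atan (tan (y1 / 2)) = y1 / 2 - PI).
    { replace (y1 / 2) with (PI + (y1 / 2 - PI)) at 1 by ring.
      rewrite Rtrigo_facts.tan_pi_plus by exact Hc. apply atan_tan. lra. }
    set (k := exp (- s1) * tan (y1 / 2)).
    exists (fun s => 2 * atan (exp s * k) + 2 * PI). split; [|split].
    * unfold k. rewrite <- Rmult_assoc, <- exp_plus, Rplus_opp_r, exp_0, Rmult_1_l, HT. field.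
    * apply char_derive. apply sin_plus_2PI.
    * intros s Hs.
      assert (H1 : atan (- (exp s1 * k)) + atan (- (exp (- s1) * a)) > PI / 2).
      { rewrite !atan_opp. unfold k. rewrite <- Rmult_assoc, <- exp_plus, Rplus_opp_r, exp_0, Rmult_1_l, HT. lra. }
      pose proof (sum_gt_inv _ _ _ _ (uv_const' s1 s k a) (sign_const' s1 s a) H1).
      rewrite !atan_opp in H.
      pose proof (atan_bound (exp s * k)). pose proof (atan_bound (exp (- s) * a)). lra.
Qed.


Definition JC (x0 : R) (eps : R -> R -> R) : Prop :=
  forall t x, 0 <= t -> in_Omega x0 t x ->
     forall e : R, 0 < e -> exists d : R, 0 < d /\
       forall s y, 0 <= s -> in_Omega x0 s y -> Rabs (s - t) < d -> Rabs (y - x) < d ->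
         Rabs (eps s y - eps t x) < e.

Lemma clamp_lip a b u u' : a <= b -> Rabs (Rmax a (Rmin b u') - Rmax a (Rmin b u)) <= Rabs (u' - u).
Proof. intros H. unfold Rmax, Rmin. repeat destruct Rle_dec; split_Rabs; lra. Qed.

Lemma clamp_in a b u : a <= b -> a <= Rmax a (Rmin b u) <= b.
Proof. intros H. unfold Rmax, Rmin. repeat destruct Rle_dec; lra. Qed.

Lemma clamp_id a b u : a <= u <= b -> Rmax a (Rmin b u) = u.
Proof. intros H. unfold Rmax, Rmin. repeat destruct Rle_dec; lra. Qed.

Lemma bounded x0 eps tau : Rabs x0 < / 10 -> JC x0 eps -> 0 <= tau ->
  exists D0, 0 <= D0 /\ forall s y, 0 <= s <= tau -> in_Omega x0 s y -> Rabs (eps s y) <= D0.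
Proof.
  intros Hx0 Hjc Htau. pose proof PI2_3_2 as Hpi.
  set (cl := fun u => Rmax 0 (Rmin tau u)).
  set (cl1 := fun u => Rmax 0 (Rmin 1 u)).
  set (l := fun s => - PI - xstar x0 s).
  set (F := fun u th => eps (cl u) (l (cl u) + 2 * PI * cl1 th)).
  assert (HF : forall u th, continuity_2d_pt F u th).
  { intros u th e.
    assert (Hin : in_Omega x0 (cl u) (l (cl u) + 2 * PI * cl1 th)).
    { unfold in_Omega, l. pose proof (clamp_in 0 1 th ltac:(lra)). fold (cl1 th) in H. nra. }
    assert (Hcl : 0 <= cl u) by (apply (clamp_in 0 tau u Htau)).
    destruct (Hjc _ _ Hcl Hin e (cond_pos e)) as [d [Hd Hd2]].
    destruct (cont_eps _ _ (xstar_cont x0 (cl u)) (d / 2) ltac:(lra)) as [d' [Hd' Hd'2]].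
    assert (Hdel : 0 < Rmin (Rmin d d') (d / (4 * PI))).
    { apply Rmin_pos. apply Rmin_pos; lra. apply Rdiv_lt_0_compat; lra. }
    exists (mkposreal _ Hdel). intros u' th' Hu Hth. simpl in Hu, Hth.
    pose proof (Rmin_l (Rmin d d') (d / (4 * PI))). pose proof (Rmin_r (Rmin d d') (d / (4 * PI))).
    pose proof (Rmin_l d d'). pose proof (Rmin_r d d').
    pose proof (clamp_lip 0 tau u u' Htau) as Hc1. fold (cl u) (cl u') in Hc1.
    pose proof (clamp_lip 0 1 th th' ltac:(lra)) as Hc2. fold (cl1 th) (cl1 th') in Hc2.
    unfold F. apply Hd2.
    - apply (clamp_in 0 tau u' Htau).
    - unfold in_Omega, l. pose proof (clamp_in 0 1 th' ltac:(lra)). fold (cl1 th') in H3. nra.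
    - lra.
    - specialize (Hd'2 (cl u') ltac:(lra)).
      unfold l.
      replace (- PI - xstar x0 (cl u') + 2 * PI * cl1 th' - (- PI - xstar x0 (cl u) + 2 * PI * cl1 th))
        with (- (xstar x0 (cl u') - xstar x0 (cl u)) + 2 * PI * (cl1 th' - cl1 th)) by ring.
      eapply Rle_lt_trans. apply Rabs_triang. rewrite Rabs_Ropp, Rabs_mult, (Rabs_right (2 * PI)) by lra.
      assert (2 * PI * Rabs (cl1 th' - cl1 th) <= 2 * PI * (d / (4 * PI))).
      { apply Rmult_le_compat_l. lra. lra. }
      assert (2 * PI * (d / (4 * PI)) = d / 2) by (field; lra). lra. }
  destruct (uniform_continuity_2d F 0 tau 0 1 (fun x y _ _ => HF x y) (mkposreal 1 Rlt_0_1)) as [del Hdel].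
  destruct (nfloor_ex ((tau + 1) / del)) as [n Hn].
  { apply Rlt_le, Rdiv_lt_0_compat. lra. apply cond_pos. }
  set (N := S n).
  assert (HN : (tau + 1) / del < INR N) by (unfold N; rewrite S_INR; lra).
  assert (HNpos : 0 < INR N) by (unfold N; rewrite S_INR; pose proof (pos_INR n); lra).
  assert (HNd : tau / INR N < del /\ 1 / INR N < del).
  { pose proof (cond_pos del).
    assert (tau + 1 < del * INR N).
    { apply Rmult_lt_reg_r with (/ del). apply Rinv_0_lt_compat; lra.
      replace (del * INR N * / del) with (INR N) by (field; lra). exact HN. }
    split; apply Rmult_lt_reg_r with (INR N); auto.
    replace (tau / INR N * INR N) with tau by (field; lra). lra.
    replace (1 / INR N * INR N) with 1 by (field; lra). lra. }
  exists (Rabs (F 0 0) + INR N). split. pose proof (Rabs_pos (F 0 0)). lra.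
  intros s y Hs Hy.
  set (th := (y - l s) / (2 * PI)).
  assert (Hth : 0 <= th <= 1).
  { unfold th, l. unfold in_Omega in Hy. split.
    apply Rdiv_le_0_compat; lra.
    apply Rmult_le_reg_r with (2 * PI). lra. replace ((y - (- PI - xstar x0 s)) / (2 * PI) * (2 * PI)) with (y - (- PI - xstar x0 s)) by (field; lra). lra. }
  assert (HFe : F s th = eps s y).
  { unfold F. assert (cl s = s) by (apply clamp_id; lra). rewrite H.
    assert (cl1 th = th) by (apply clamp_id; lra). rewrite H0.
    unfold th. f_equal. field. lra. }
  rewrite <- HFe.
  assert (Hchain : forall k, (k <= N)%nat -> Rabs (F (INR k * s / INR N) (INR k * th / INR N) - F 0 0) <= INR k).
  { induction k as [|k IH]; intros Hk.
    - change (INR 0) with 0. replace (0 * s / INR N) with 0 by (field; lra). replace (0 * th / INR N) with 0 by (field; lra).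
      rewrite Rminus_diag_eq, Rabs_R0 by reflexivity. lra.
    - specialize (IH ltac:(lia)).
      assert (HkN : INR k + 1 <= INR N) by (rewrite <- S_INR; apply le_INR; exact Hk).
      pose proof (pos_INR k).
      assert (Hb : forall z, 0 <= z -> forall m, 0 <= INR m <= INR N -> 0 <= INR m * z / INR N <= z).
      { intros z Hz m Hm. split. apply Rdiv_le_0_compat; nra.
        apply Rmult_le_reg_r with (INR N); auto. replace (INR m * z / INR N * INR N) with (INR m * z) by (field; lra). nra. }
      assert (Hstep : Rabs (F (INR (S k) * s / INR N) (INR (S k) * th / INR N) - F (INR k * s / INR N) (INR k * th / INR N)) < 1).
      { rewrite S_INR. apply Hdel.
        - pose proof (Hb s (proj1 Hs) k ltac:(lra)). lra.
        - pose proof (Hb th (proj1 Hth) k ltac:(lra)). lra.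
        - pose proof (Hb s (proj1 Hs) (S k) ltac:(rewrite S_INR; lra)). rewrite S_INR in H0. lra.
        - pose proof (Hb th (proj1 Hth) (S k) ltac:(rewrite S_INR; lra)). rewrite S_INR in H0. lra.
        - replace ((INR k + 1) * s / INR N - INR k * s / INR N) with (s / INR N) by (field; lra).
          rewrite Rabs_right by (apply Rle_ge, Rdiv_le_0_compat; lra).
          apply Rle_lt_trans with (tau / INR N). apply Rmult_le_compat_r. left; apply Rinv_0_lt_compat; lra. lra. lra.
        - replace ((INR k + 1) * th / INR N - INR k * th / INR N) with (th / INR N) by (field; lra).
          rewrite Rabs_right by (apply Rle_ge, Rdiv_le_0_compat; lra).
          apply Rle_lt_trans with (1 / INR N). apply Rmult_le_compat_r. left; apply Rinv_0_lt_compat; lra. lra. lra. }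
      replace (F (INR (S k) * s / INR N) (INR (S k) * th / INR N) - F 0 0) with
        ((F (INR (S k) * s / INR N) (INR (S k) * th / INR N) - F (INR k * s / INR N) (INR k * th / INR N))
         + (F (INR k * s / INR N) (INR k * th / INR N) - F 0 0)) by ring.
      eapply Rle_trans. apply Rabs_triang. rewrite S_INR in Hstep |- *. lra. }
  specialize (Hchain N (le_n N)).
  replace (INR N * s / INR N) with s in Hchain by (field; lra).
  replace (INR N * th / INR N) with th in Hchain by (field; lra).
  pose proof (Rabs_triang_inv (F s th) (F 0 0)). lra.
Qed.


Lemma is_RInt_affW (a b K L IW : R) : is_RInt W a b IW ->
  is_RInt (fun y => K * W y + L) a b (K * IW + L * (b - a)).
Proof.
  intros H. pose proof (is_RInt_plus _ _ a b _ _ (is_RInt_scal _ a b K _ H) (is_RInt_const a b L)) as H2.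
  replace (K * IW + L * (b - a)) with (plus (scal K IW) (scal (b - a) L)).
  exact H2. unfold plus, scal; simpl. unfold mult; simpl. ring.
Qed.

Lemma RInt_abs_bound (f B : R -> R) a b IB : a <= b -> ex_RInt f a b -> is_RInt B a b IB ->
  (forall y, a < y < b -> Rabs (f y) <= B y) -> Rabs (RInt f a b) <= IB.
Proof.
  intros Hab Hf HB Hle.
  assert (H1 : RInt f a b <= RInt B a b).
  { apply RInt_le; auto. exists IB; auto. intros y Hy. specialize (Hle y Hy). apply Rabs_le_between in Hle. lra. }
  assert (HB' : is_RInt (fun y => - B y) a b (- IB)) by exact (is_RInt_opp _ a b _ HB).
  assert (H2 : RInt (fun y => - B y) a b <= RInt f a b).
  { apply RInt_le; auto. exists (- IB); auto. intros y Hy. specialize (Hle y Hy). apply Rabs_le_between in Hle.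
    lra. }
  rewrite (is_RInt_unique _ _ _ _ HB) in H1. rewrite (is_RInt_unique _ _ _ _ HB') in H2.
  apply Rabs_le_between. lra.
Qed.

Definition Ctx th x0 eps0 eps M tau : Prop :=
  0 < th < 1 /\ Rabs x0 < / 10 /\ is_global_solution x0 eps0 eps /\ 0 <= M /\
  (forall y, in_Omega x0 0 y -> Rabs (eps0 y) <= M * W y) /\ 0 <= tau.

Definition PD th x0 (eps : R -> R -> R) M tau D := forall s y, 0 <= s <= tau -> in_Omega x0 s y ->
  Rabs (eps s y) <= M * exp (- (1 - th) * s) * W y + D * exp (9 * s).

Lemma sol_JC x0 eps0 eps : is_global_solution x0 eps0 eps -> JC x0 eps.
Proof. intros [_ [H _]]. exact H. Qed.

Lemma int_incl x0 s y : in_Omega_int x0 s y -> in_Omega x0 s y.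
Proof. unfold in_Omega_int, in_Omega. lra. Qed.

Lemma eps_cont_int x0 eps0 eps s y : is_global_solution x0 eps0 eps -> 0 <= s -> in_Omega_int x0 s y ->
  continuous (fun y => eps s y) y.
Proof.
  intros Hsol Hs Hy. apply eps_cont. intros e He.
  destruct (sol_JC _ _ _ Hsol s y Hs (int_incl _ _ _ Hy) e He) as [d [Hd Hd2]].
  destruct Hy as [Hy1 Hy2].
  set (m := Rmin d (Rmin (y - (- PI - xstar x0 s)) (PI - xstar x0 s - y))).
  assert (Hm : 0 < m /\ m <= d /\ m <= y - (- PI - xstar x0 s) /\ m <= PI - xstar x0 s - y).
  { unfold m. pose proof (Rmin_l d (Rmin (y - (- PI - xstar x0 s)) (PI - xstar x0 s - y))).
    pose proof (Rmin_r d (Rmin (y - (- PI - xstar x0 s)) (PI - xstar x0 s - y))).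
    pose proof (Rmin_l (y - (- PI - xstar x0 s)) (PI - xstar x0 s - y)).
    pose proof (Rmin_r (y - (- PI - xstar x0 s)) (PI - xstar x0 s - y)).
    assert (0 < m) by (apply Rmin_pos; [lra| apply Rmin_pos; lra]). unfold m in H3. lra. }
  exists m. split. lra. intros y' Hy'. apply Hd2; auto.
  - apply Rabs_lt_between in Hy'. unfold in_Omega. lra.
  - rewrite Rminus_diag_eq, Rabs_R0 by reflexivity. lra.
  - lra.
Qed.

Lemma Omega_bound x0 s y : Rabs x0 < / 10 -> 0 <= s -> in_Omega x0 s y -> Rabs y <= PI + / 10.
Proof.
  intros Hx Hs Hy. pose proof (xstar_bound x0 s Hx Hs). unfold in_Omega in Hy.
  apply Rabs_le_between in H. apply Rabs_le_between. lra.
Qed.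

Lemma zero_int x0 s : Rabs x0 < / 10 -> 0 <= s -> in_Omega_int x0 s 0.
Proof.
  intros Hx Hs. pose proof (xstar_bound x0 s Hx Hs). pose proof PI2_3_2.
  apply Rabs_le_between in H. unfold in_Omega_int. lra.
Qed.

Lemma seg_int x0 s X z : Rabs x0 < / 10 -> 0 <= s -> in_Omega_int x0 s X ->
  Rmin 0 X <= z <= Rmax 0 X -> in_Omega_int x0 s z.
Proof.
  intros Hx Hs HX Hz. pose proof (zero_int x0 s Hx Hs) as H0. unfold in_Omega_int in *.
  unfold Rmin, Rmax in Hz. destruct Rle_dec in Hz; lra.
Qed.

Lemma RInt_bound th x0 eps0 eps M tau D s X : Ctx th x0 eps0 eps M tau -> PD th x0 eps M tau D ->
  0 <= s <= tau -> in_Omega_int x0 s X ->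
  Rabs (RInt (fun y => eps s y) 0 X) <= M * exp (- (1 - th) * s) * V X + D * exp (9 * s) * Rabs X.
Proof.
  intros [Hth [Hx0 [Hsol [HM [HM2 Htau]]]]] HP Hs HX.
  pose proof (Omega_bound x0 s X Hx0 (proj1 Hs) (int_incl _ _ _ HX)) as HXb.
  pose proof PI2_3_2. apply Rabs_le_between in HXb.
  assert (Hex : ex_RInt (fun y => eps s y) 0 X).
  { apply (ex_RInt_continuous (V := R_CompleteNormedModule)). intros z Hz. apply (eps_cont_int x0 eps0 eps); auto. lra.
    apply (seg_int x0 s X); auto. lra. }
  set (K := M * exp (- (1 - th) * s)). set (L := D * exp (9 * s)).
  destruct (Rle_or_lt 0 X) as [HX0|HX0].
  - rewrite (Rabs_right X) by lra.
    replace (K * V X + L * X) with (K * V X + L * (X - 0)) by ring.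
    apply (RInt_abs_bound _ (fun y => K * W y + L)); auto.
    apply is_RInt_affW. apply V_int_pos. lra.
    intros y Hy. apply HP. lra. apply int_incl. apply (seg_int x0 s X); auto. lra.
    unfold Rmin, Rmax; destruct Rle_dec; lra.
  - rewrite (Rabs_left X) by lra.
    assert (Hex' : ex_RInt (fun y => eps s y) X 0).
    { apply ex_RInt_swap. exact Hex. }
    rewrite <- (opp_RInt_swap _ _ _ Hex'). unfold opp; simpl. rewrite Rabs_Ropp.
    replace (K * V X + L * - X) with (K * V X + L * (0 - X)) by ring.
    apply (RInt_abs_bound _ (fun y => K * W y + L)); auto. lra.
    apply is_RInt_affW. apply V_int_neg. lra.
    intros y Hy. apply HP. lra. apply int_incl. apply (seg_int x0 s X); auto. lra.
    unfold Rmin, Rmax; destruct Rle_dec; lra.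
Qed.

Lemma Bf_derive (M c D : R) (X : R -> R) (s : R) : (forall s, is_derive X s (sin (X s))) ->
  is_derive (fun s => M * exp (- c * s) * W (X s) + 5 / 7 * D * exp (9 * s)) s
    (M * (- c * exp (- c * s) * W (X s) + exp (- c * s) * (dW (X s) * sin (X s))) + 5 / 7 * D * (9 * exp (9 * s))).
Proof.
  intros HX. auto_derive.
  - split; [|split; auto]. exists (dW (X s)). apply W_derive. exists (sin (X s)). apply HX.
  - replace (Derive (fun x => W x) (X s)) with (dW (X s)) by (symmetry; apply is_derive_unique; apply W_derive).
    replace (Derive (fun x => X x) s) with (sin (X s)) by (symmetry; apply is_derive_unique; apply HX).
    ring.
Qed.

Lemma char_step_sig th x0 eps0 eps M tau D (X : R -> R) s1 sg :
  Ctx th x0 eps0 eps M tau -> PD th x0 eps M tau D -> 0 <= D -> 0 < s1 <= tau -> (sg = 1 \/ sg = -1) ->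
  (forall s, is_derive X s (sin (X s))) -> (forall s, 0 <= s -> in_Omega_int x0 s (X s)) ->
  sg * eps s1 (X s1) <= M * exp (- (1 - th) * s1) * W (X s1) + 5 / 7 * D * exp (9 * s1).
Proof.
  intros HC HP HD Hs1 Hsg HX HXin.
  pose proof HC as [Hth [Hx0 [Hsol [HM [HM2 Htau]]]]].
  set (c := 1 - th).
  set (Bf := fun s => M * exp (- c * s) * W (X s) + 5 / 7 * D * exp (9 * s)).
  set (Bd := fun s => M * (- c * exp (- c * s) * W (X s) + exp (- c * s) * (dW (X s) * sin (X s))) + 5 / 7 * D * (9 * exp (9 * s))).
  assert (HBd : forall s, is_derive Bf s (Bd s)) by (intros s; apply Bf_derive; exact HX).
  assert (Hsg1 : Rabs sg = 1) by (destruct Hsg; subst; [rewrite Rabs_R1 | rewrite Rabs_left by lra; ring]; reflexivity).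
  set (g := fun s => sg * eps s (X s) - Bf s).
  set (g' := fun s => sg * (Derive (fun z => eps z (X s)) s + Derive (fun y => eps s y) (X s) * sin (X s)) - Bd s).
  assert (Hfin : g s1 <= 0).
  { apply (comparison g g' s1 2); [lra | lra | | | | ].
    -
      intros e He.
      destruct (sol_JC _ _ _ Hsol 0 (X 0) (Rle_refl 0) (int_incl _ _ _ (HXin 0 (Rle_refl 0))) (e / 2) ltac:(lra)) as [d1 [Hd1 Hd1']].
      assert (HXc : continuous X 0) by (apply cont_of_derive; eexists; apply HX).
      destruct (cont_eps X 0 HXc d1 Hd1) as [d2 [Hd2 Hd2']].
      assert (HBc : continuous Bf 0) by (apply cont_of_derive; eexists; apply HBd).
      destruct (cont_eps Bf 0 HBc (e / 2) ltac:(lra)) as [d3 [Hd3 Hd3']].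
      exists (Rmin (Rmin d1 d2) d3). split. apply Rmin_pos; [apply Rmin_pos|]; lra.
      intros s Hs0 Hsd Hss.
      pose proof (Rmin_l (Rmin d1 d2) d3). pose proof (Rmin_r (Rmin d1 d2) d3).
      pose proof (Rmin_l d1 d2). pose proof (Rmin_r d1 d2).
      assert (Habs : Rabs (s - 0) < Rmin (Rmin d1 d2) d3) by (rewrite Rminus_0_r, Rabs_right; lra).
      specialize (Hd2' s ltac:(lra)). specialize (Hd3' s ltac:(lra)).
      specialize (Hd1' s (X s) Hs0 (int_incl _ _ _ (HXin s Hs0)) ltac:(lra) Hd2').
      unfold g.
      replace (sg * eps s (X s) - Bf s - (sg * eps 0 (X 0) - Bf 0))
        with (sg * (eps s (X s) - eps 0 (X 0)) - (Bf s - Bf 0)) by ring.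
      eapply Rle_lt_trans. apply Rabs_triang. rewrite Rabs_Ropp, Rabs_mult, Hsg1. lra.
    -
      intros s Hs.
      destruct (Omega_open x0 s (X s) (proj1 Hs) (HXin s (Rlt_le _ _ (proj1 Hs)))) as [d [Hd Hd2]].
      destruct (proj2 (proj2 Hsol) s (X s) (proj1 Hs) (HXin s (Rlt_le _ _ (proj1 Hs)))) as [Ht [Hy [Hct [Hcy Heq]]]].
      assert (Hch : is_derive (fun r => eps r (X r)) s
         (Derive (fun z => eps z (X s)) s + Derive (fun y => eps s y) (X s) * sin (X s))).
      { apply (chain eps X s (sin (X s)) d Hd).
        - intros u v Hu Hv. destruct (Hd2 u v Hu Hv) as [Hu0 Huv].
          destruct (proj2 (proj2 Hsol) u v Hu0 Huv) as [Ht' _]. exact Ht'.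
        - exact Hy.
        - apply (proj2 (continuity_2d_pt_filterlim _ _ _)). exact Hct.
        - apply HX. }
      apply is_derive_Reals. unfold g, g'.
      apply (derivable_pt_lim_minus (fun s => sg * eps s (X s)) Bf).
      apply (derivable_pt_lim_scal (fun s => eps s (X s))). apply is_derive_Reals. exact Hch.
      apply is_derive_Reals. apply HBd.
    -
      intros s Hs Hgpos.
      destruct (proj2 (proj2 Hsol) s (X s) (proj1 Hs) (HXin s (Rlt_le _ _ (proj1 Hs)))) as [Ht [Hy [Hct [Hcy Heq]]]].
      unfold g'. rewrite Heq. unfold g, Bf.
      pose proof (RInt_bound th x0 eps0 eps M tau D s (X s) HC HP ltac:(lra) (HXin s ltac:(lra))) as HI.
      pose proof (Omega_bound x0 s (X s) Hx0 ltac:(lra) (int_incl _ _ _ (HXin s ltac:(lra)))) as HXb.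
      pose proof (key_ineq th (X s) Hth HXb) as Hkey.
      unfold g in Hgpos. unfold Bf in Hgpos. unfold Bd. fold c in Hkey, HI.
      set (Xs := X s) in *. set (phi := eps s Xs) in *.
      set (I := RInt (fun y => eps s y) 0 Xs) in *.
      set (e := exp (- c * s)) in *. set (E := exp (9 * s)) in *.
      assert (He : 0 < e) by apply exp_pos. assert (HE : 0 < E) by apply exp_pos.
      pose proof (COS_bound Xs) as Hcos. pose proof (SIN_bound Xs) as Hsin.
      assert (Hsa : Rabs (sin Xs) <= 1) by (apply Rabs_le; lra).
      pose proof PI_4 as Hpi4.
      assert (F1 : M * e * ((2 * cos Xs + c) * W Xs - dW Xs * sin Xs + Rabs (sin Xs) * V Xs) <= 0).
      { rewrite <- (Rmult_0_r (M * e)). apply Rmult_le_compat_l. apply Rmult_le_pos; lra. exact Hkey. }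
      assert (F2 : Rabs (sin Xs) * Rabs Xs <= PI + / 10).
      { rewrite <- (Rmult_1_l (PI + / 10)). apply Rmult_le_compat; auto; apply Rabs_pos. }
      assert (F2' : D * E * (10 / 7 * cos Xs - 45 / 7 + Rabs (sin Xs) * Rabs Xs) <= 0).
      { rewrite <- (Rmult_0_r (D * E)). apply Rmult_le_compat_l. apply Rmult_le_pos; lra. lra. }
      assert (F4 : sg * (sin Xs * I) <= Rabs (sin Xs) * (M * e * V Xs + D * E * Rabs Xs)).
      { eapply Rle_trans. apply Rle_abs. rewrite Rabs_mult, Hsg1, Rmult_1_l, Rabs_mult.
        apply Rmult_le_compat_l. apply Rabs_pos. exact HI. }
      set (gs := sg * phi - (M * e * W Xs + 5 / 7 * D * E)) in *.
      assert (F3 : cos Xs * gs <= gs).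
      { rewrite <- (Rmult_1_l gs) at 2. apply Rmult_le_compat_r; lra. }
      unfold gs in *. lra.
    - unfold g, Bf. rewrite (proj1 Hsol) by (apply int_incl; apply HXin; lra).
      pose proof (HM2 (X 0) (int_incl _ _ _ (HXin 0 (Rle_refl 0)))).
      rewrite Rmult_0_r, exp_0, Rmult_0_r, exp_0, !Rmult_1_r.
      assert (sg * eps0 (X 0) <= Rabs (eps0 (X 0))).
      { eapply Rle_trans. apply Rle_abs. rewrite Rabs_mult, Hsg1. lra. }
      lra. }
  unfold g, Bf in Hfin. fold c. lra.
Qed.

Lemma char_step th x0 eps0 eps M tau D (X : R -> R) s1 :
  Ctx th x0 eps0 eps M tau -> PD th x0 eps M tau D -> 0 <= D -> 0 < s1 <= tau ->
  (forall s, is_derive X s (sin (X s))) -> (forall s, 0 <= s -> in_Omega_int x0 s (X s)) ->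
  Rabs (eps s1 (X s1)) <= M * exp (- (1 - th) * s1) * W (X s1) + 5 / 7 * D * exp (9 * s1).
Proof.
  intros. pose proof (char_step_sig th x0 eps0 eps M tau D X s1 1 H H0 H1 H2 (or_introl eq_refl) H3 H4).
  pose proof (char_step_sig th x0 eps0 eps M tau D X s1 (-1) H H0 H1 H2 (or_intror eq_refl) H3 H4).
  apply Rabs_le. lra.
Qed.

Lemma approx_int x0 s y r : Rabs x0 < / 10 -> 0 <= s -> in_Omega x0 s y -> 0 < r <= 1 ->
  exists y', in_Omega_int x0 s y' /\ Rabs (y' - y) <= r.
Proof.
  intros Hx Hs [H1 H2] Hr. pose proof PI2_3_2.
  destruct (Rle_lt_or_eq_dec _ _ H1) as [H1'|H1'].
  - destruct (Rle_lt_or_eq_dec _ _ H2) as [H2'|H2'].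
    + exists y. split. split; auto. rewrite Rminus_diag_eq, Rabs_R0 by reflexivity. lra.
    + exists (y - r). split. unfold in_Omega_int. lra.
      replace (y - r - y) with (- r) by ring. rewrite Rabs_Ropp, Rabs_right; lra.
  - exists (y + r). split. unfold in_Omega_int. lra.
    replace (y + r - y) with r by ring. rewrite Rabs_right; lra.
Qed.

Lemma step th x0 eps0 eps M tau D :
  Ctx th x0 eps0 eps M tau -> PD th x0 eps M tau D -> 0 <= D -> PD th x0 eps M tau (5 / 7 * D).
Proof.
  intros HC HP HD. pose proof HC as [Hth [Hx0 [Hsol [HM [HM2 Htau]]]]].
  assert (Hint : forall s1 y1, 0 < s1 <= tau -> in_Omega_int x0 s1 y1 ->
     Rabs (eps s1 y1) <= M * exp (- (1 - th) * s1) * W y1 + 5 / 7 * D * exp (9 * s1)).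
  { intros s1 y1 Hs1 Hy1. destruct (charac x0 s1 y1 Hx0 (proj1 Hs1) Hy1) as [X [HX1 [HXd HXin]]].
    rewrite <- HX1. apply (char_step th x0 eps0 eps M tau D X s1); auto. }
  intros s1 y1 Hs1 Hy1.
  destruct (Rle_lt_or_eq_dec 0 s1 (proj1 Hs1)) as [Hs1p|Hs10].
  - apply Rle_plus_epsilon. intros eta Heta.
    destruct (sol_JC _ _ _ Hsol s1 y1 (proj1 Hs1) Hy1 (eta / 2) ltac:(lra)) as [d [Hd Hd2]].
    set (K := M * exp (- (1 - th) * s1)).
    assert (HK : 0 <= K) by (unfold K; apply Rmult_le_pos; [lra | left; apply exp_pos]).
    set (r := Rmin (d / 2) (Rmin 1 (eta / (4 * (K + 1))))).
    assert (Hr : 0 < r /\ r <= d / 2 /\ r <= 1 /\ r <= eta / (4 * (K + 1))).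
    { unfold r. pose proof (Rmin_l (d / 2) (Rmin 1 (eta / (4 * (K + 1))))).
      pose proof (Rmin_r (d / 2) (Rmin 1 (eta / (4 * (K + 1))))).
      pose proof (Rmin_l 1 (eta / (4 * (K + 1)))). pose proof (Rmin_r 1 (eta / (4 * (K + 1)))).
      assert (0 < eta / (4 * (K + 1))) by (apply Rdiv_lt_0_compat; lra).
      assert (0 < Rmin (d / 2) (Rmin 1 (eta / (4 * (K + 1))))) by (apply Rmin_pos; [lra | apply Rmin_pos; lra]).
      unfold r. lra. }
    destruct (approx_int x0 s1 y1 r Hx0 (proj1 Hs1) Hy1 ltac:(lra)) as [y [Hy Hyr]].
    pose proof (Hint s1 y (conj Hs1p (proj2 Hs1)) Hy) as Hb.
    specialize (Hd2 s1 y (proj1 Hs1) (int_incl _ _ _ Hy) ltac:(rewrite Rminus_diag_eq, Rabs_R0 by reflexivity; lra) ltac:(lra)).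
    pose proof (W_lip y y1) as HW.
    assert (HKW : K * (W y - W y1) <= K * (3 / 2 * r)).
    { apply Rmult_le_compat_l. auto. apply Rabs_le_between in HW. lra. }
    assert (HKr : K * (3 / 2 * r) <= eta / 2).
    { assert (K * r <= K * (eta / (4 * (K + 1)))) by (apply Rmult_le_compat_l; lra).
      assert (K * (eta / (4 * (K + 1))) <= eta / 4).
      { unfold Rdiv. rewrite Rinv_mult. 
        assert (K * / (K + 1) <= 1).
        { apply Rmult_le_reg_r with (K + 1). lra. rewrite Rmult_assoc, Rinv_l by lra. lra. }
        assert (0 < / (K + 1)) by (apply Rinv_0_lt_compat; lra).
        replace (K * (eta * (/ 4 * / (K + 1)))) with ((K * / (K + 1)) * (eta / 4)) by (unfold Rdiv; ring).
        apply Rle_trans with (1 * (eta / 4)); [apply Rmult_le_compat_r; lra | lra]. }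
      lra. }
    fold K in Hb. pose proof (Rabs_triang_inv (eps s1 y1) (eps s1 y)).
    rewrite <- Rabs_Ropp in Hd2. replace (- (eps s1 y - eps s1 y1)) with (eps s1 y1 - eps s1 y) in Hd2 by ring.
    fold K. lra.
  - subst s1. rewrite (proj1 Hsol) by exact Hy1. pose proof (HM2 y1 Hy1).
    rewrite Rmult_0_r, exp_0, Rmult_0_r, exp_0, !Rmult_1_r.
    assert (0 <= 5 / 7 * D) by lra. lra.
Qed.

Lemma iter th x0 eps0 eps M tau D0 :
  Ctx th x0 eps0 eps M tau -> PD th x0 eps M tau D0 -> 0 <= D0 ->
  forall n, PD th x0 eps M tau ((5 / 7) ^ n * D0).
Proof.
  intros HC HP HD0 n. induction n as [|n IH].
  - simpl. rewrite Rmult_1_l. exact HP.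
  - replace ((5 / 7) ^ S n * D0) with (5 / 7 * ((5 / 7) ^ n * D0)) by (simpl; ring).
    apply (step th x0 eps0 eps M tau); auto.
    apply Rmult_le_pos; auto. apply pow_le. lra.
Qed.

Lemma final_bound th x0 eps0 eps M tau :
  Ctx th x0 eps0 eps M tau -> forall s y, 0 <= s <= tau -> in_Omega x0 s y ->
  Rabs (eps s y) <= M * exp (- (1 - th) * s) * W y.
Proof.
  intros HC. pose proof HC as [Hth [Hx0 [Hsol [HM [HM2 Htau]]]]].
  destruct (bounded x0 eps tau Hx0 (sol_JC _ _ _ Hsol) Htau) as [D0 [HD0 HD0b]].
  assert (HP : PD th x0 eps M tau D0).
  { intros s y Hs Hy. specialize (HD0b s y Hs Hy).
    assert (0 <= M * exp (- (1 - th) * s) * W y).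
    { apply Rmult_le_pos. apply Rmult_le_pos. lra. left; apply exp_pos. apply W_nonneg. }
    assert (1 <= exp (9 * s)).
    { rewrite <- exp_0. destruct (Req_dec s 0). subst. rewrite Rmult_0_r. lra. left; apply exp_increasing; lra. }
    assert (D0 <= D0 * exp (9 * s)) by (rewrite <- (Rmult_1_r D0) at 1; apply Rmult_le_compat_l; lra).
    lra. }
  intros s y Hs Hy. apply Rle_plus_epsilon. intros eta Heta.
  set (E := exp (9 * s)). assert (HE : 0 < E) by apply exp_pos.
  destruct (pow_lt_1_zero (5 / 7) ltac:(rewrite Rabs_right; lra) (eta / (D0 * E + 1))) as [N HN].
  { apply Rdiv_lt_0_compat. lra. assert (0 <= D0 * E) by (apply Rmult_le_pos; lra). lra. }
  specialize (HN N (le_n N)). rewrite Rabs_right in HN by (apply Rle_ge, pow_le; lra).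
  pose proof (iter th x0 eps0 eps M tau D0 HC HP HD0 N s y Hs Hy) as H.
  fold E in H.
  assert ((5 / 7) ^ N * D0 * E <= eta).
  { assert (0 <= D0 * E) by (apply Rmult_le_pos; lra).
    assert ((5 / 7) ^ N * (D0 * E) <= eta / (D0 * E + 1) * (D0 * E)).
    { apply Rmult_le_compat_r; lra. }
    assert (eta / (D0 * E + 1) * (D0 * E) <= eta).
    { unfold Rdiv. rewrite Rmult_assoc. rewrite <- (Rmult_1_r eta) at 2. apply Rmult_le_compat_l. lra.
      apply Rmult_le_reg_r with (D0 * E + 1). lra. rewrite Rmult_comm, <- Rmult_assoc, Rinv_r by lra. lra. }
    rewrite Rmult_assoc. lra. }
  lra.
Qed.


Lemma W_zero_Omega x0 s y : Rabs x0 < / 10 -> 0 <= s -> in_Omega x0 s y -> W y = 0 -> y = 0.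
Proof.
  intros Hx Hs Hy HW. pose proof (Omega_bound x0 s y Hx Hs Hy) as Hb.
  assert (Hs0 : sin (y / 2) = 0).
  { unfold W in HW. destruct (Req_dec (sin (y/2)) 0); auto.
    apply Rabs_no_R0 in H. apply (pow_nonzero _ 3) in H. contradiction. }
  destruct (sin_eq_0_0 _ Hs0) as [k Hk0].
  assert (Hk : y = 2 * PI * IZR k) by lra.
  - pose proof PI2_3_2. apply Rabs_le_between in Hb. rewrite Hk in Hb.
    assert (IZR k < 1).
    { destruct (Rlt_or_le (IZR k) 1) as [H1|H1]; auto. assert (2 * PI * IZR k >= 2 * PI) by nra. lra. }
    assert (-1 < IZR k).
    { destruct (Rlt_or_le (-1) (IZR k)) as [H1|H1]; auto. assert (2 * PI * IZR k <= - (2 * PI)) by nra. lra. }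
    apply lt_IZR in H0. apply lt_IZR in H1. assert (k = 0%Z) by lia. subst k. rewrite Hk. ring.
Qed.

Lemma W_PI2 : W (PI / 2) <> 0.
Proof.
  apply Rgt_not_eq, W_pos. intros [k Hk]. pose proof PI2_3_2.
  assert (0 < IZR k).
  { destruct (Rlt_or_le 0 (IZR k)) as [H1|H1]; auto. assert (2 * PI * IZR k <= 0) by nra. lra. }
  assert (IZR k < 1).
  { destruct (Rlt_or_le (IZR k) 1) as [H1|H1]; auto. assert (2 * PI * IZR k >= 2 * PI) by nra. lra. }
  apply lt_IZR in H0. apply lt_IZR in H1. lia.
Qed.

Theorem proposition3p1 :
  forall theta : R, 0 < theta < 1 ->
  exists (delta : R) (W : R -> R),
    0 < delta /\
    (forall x, 0 <= W x) /\
    (forall x, W (x + 2 * PI) = W x) /\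
    W1inf W /\
    bigO_cube0 W /\
    (forall x, ~ in_2piZ x -> 0 < W x) /\
    forall (x0 : R) (eps0 : R -> R) (eps : R -> R -> R),
      - delta < x0 < delta ->
      C3_on (- PI - xstar x0 0) (PI - xstar x0 0) eps0 ->
      bigO_cube0 eps0 ->
      is_global_solution x0 eps0 eps ->
      forall t : R, 0 <= t ->
        Rbar_le (Linf_ratio x0 t (eps t) W)
                (Rbar_mult (Finite (exp (- (1 - theta) * t)))
                           (Linf_ratio x0 0 eps0 W)).
Proof.
  intros th Hth. exists (/ 10), W.
  split. lra. split. apply W_nonneg. split. apply W_per. split. apply W_W1inf.
  split. apply W_bigO. split. apply W_pos.
  intros x0 eps0 eps Hx0 _ HO Hsol t Ht.
  assert (Hx0' : Rabs x0 < / 10) by (apply Rabs_lt_between; lra).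
  pose proof PI2_3_2 as Hpi.
  assert (HPI2 : in_Omega x0 0 (PI / 2)).
  { pose proof (xstar_bound x0 0 Hx0' (Rle_refl 0)). apply Rabs_le_between in H.
    unfold in_Omega. lra. }
  unfold Linf_ratio at 2.
  set (E0 := fun r => exists x, in_Omega x0 0 x /\ W x <> 0 /\ r = Rabs (eps0 x / W x)).
  destruct (Lub_Rbar_correct E0) as [Hub Hlub].
  assert (HE0 : E0 (Rabs (eps0 (PI / 2) / W (PI / 2)))).
  { exists (PI / 2). split; auto. split; auto. apply W_PI2. }
  destruct (Lub_Rbar E0) as [M| |] eqn:HL.
  - assert (HM0 : 0 <= M).
    { specialize (Hub _ HE0). simpl in Hub. pose proof (Rabs_pos (eps0 (PI / 2) / W (PI / 2))). lra. }
    assert (HM2 : forall y, in_Omega x0 0 y -> Rabs (eps0 y) <= M * W y).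
    { intros y Hy. destruct (Req_dec (W y) 0) as [HW|HW].
      - pose proof (W_zero_Omega x0 0 y Hx0' (Rle_refl 0) Hy HW). subst y.
        destruct HO as [C [eta [Heta HO]]]. specialize (HO 0 ltac:(rewrite Rabs_R0; lra)).
        rewrite Rabs_R0 in HO. simpl in HO. rewrite HW. rewrite Rmult_0_r.
        assert (C * (0 * (0 * (0 * 1))) = 0) by ring. pose proof (Rabs_pos (eps0 0)). lra.
      - assert (HE : E0 (Rabs (eps0 y / W y))) by (exists y; auto).
        specialize (Hub _ HE). simpl in Hub.
        assert (HWp : 0 < W y) by (pose proof (W_nonneg y); lra).
        rewrite Rabs_div in Hub by auto. rewrite (Rabs_right (W y)) in Hub by lra.
        apply Rmult_le_reg_r with (/ W y). apply Rinv_0_lt_compat; lra.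
        rewrite Rmult_assoc, Rinv_r by lra. rewrite Rmult_1_r. exact Hub. }
    assert (HC : Ctx th x0 eps0 eps M t) by (unfold Ctx; exact (conj Hth (conj Hx0' (conj Hsol (conj HM0 (conj HM2 Ht)))))).
    pose proof (final_bound th x0 eps0 eps M t HC) as Hfin.
    simpl. unfold Linf_ratio.
    set (Et := fun r => exists x, in_Omega x0 t x /\ W x <> 0 /\ r = Rabs (eps t x / W x)).
    apply (proj2 (Lub_Rbar_correct Et)).
    intros r [x [Hx [HW Hr]]]. subst r. simpl.
    specialize (Hfin t x ltac:(lra) Hx).
    assert (HWp : 0 < W x) by (pose proof (W_nonneg x); lra).
    rewrite Rabs_div by auto. rewrite (Rabs_right (W x)) by lra.
    apply Rmult_le_reg_r with (W x). lra.
    unfold Rdiv. rewrite Rmult_assoc, Rinv_l by lra. rewrite Rmult_1_r.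
    replace (exp (- (1 - th) * t) * M * W x) with (M * exp (- (1 - th) * t) * W x) by ring.
    exact Hfin.
  - replace (Rbar_mult (Finite (exp (- (1 - th) * t))) p_infty) with p_infty.
    destruct (Linf_ratio x0 t (eps t) W); simpl; auto.
    symmetry. rewrite Rbar_mult_comm. apply is_Rbar_mult_unique. apply is_Rbar_mult_p_infty_pos.
    simpl. apply exp_pos.
  - specialize (Hub _ HE0). simpl in Hub. contradiction.
Qed.
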